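(* Let $A\in\mathbb{R}^{n\times n}$, let $s$ be an integer with $1\leq s<d(A)$, and let $v_0\in\mathbb{R}^n$ with $\|v_0\|=1$ and $d(A,v_0)\geq s+1$. Then all vectors of the Arnoldi cross iteration ACI($s$) started at $v_0$ are well defined (i.e. $\widetilde w_k\neq 0$ and $\widetilde v_{k+1}\neq 0$ for all $k$, with $d(A,v_k)\geq s+1$ and $d(A^T,w_k)\geq s+1$), and $$\|\widetilde w_k\|\leq\|\widetilde v_{k+1}\|\leq\|\widetilde w_{k+1}\|\leq\|\widetilde v_{k+2}\|\leq\Phi_s(A^T)=\Phi_s(A),\qquad k=0,1,2,\dots.$$ Moreover, $\|\widetilde w_k\|=\|\widetilde v_{k+1}\|$ holds if and only if $v_k=\alpha v_{k+1}$ for some $\alpha\neq 0$, and $\|\widetilde v_{k+1}\|=\|\widetilde w_{k+1}\|$ holds if and only if $w_k=\beta w_{k+1}$ for some $\beta\neq 0$.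
   Context: Notation: for $A\in\mathbb{R}^{n\times n}$, $d(A)$ is the degree of the minimal polynomial of $A$, $d(A,v)$ is the grade of $v$ w.r.t. $A$ (degree of the monic polynomial $p$ of smallest degree with $p(A)v=0$), $\mathcal{K}_k(A,v)=\mathrm{span}\{v,Av,\dots,A^{k-1}v\}$, $\mathcal{M}_s$ is the set of real monic polynomials of degree $s$, and $\|\cdot\|$ is the Euclidean norm. For a matrix $B$ and a vector $u$ with $d(B,u)\geq s$, let $P_s(\cdot\,;u)_B\in\mathcal{M}_s$ be the unique monic polynomial with $P_s(B;u)u\perp\mathcal{K}_s(B,u)$ (equivalently $P_s(B;u)u\in B^su+\mathcal{K}_s(B,u)$ orthogonal to $\mathcal{K}_s(B,u)$). The Arnoldi cross iteration ACI($s$) started at $v_0$ is: for $k=0,1,2,\dots$: $\widetilde w_k=P_s(A;v_k)v_k$ (polynomial determined with respect to $A$), $w_k=\widetilde w_k/\|\widetilde w_k\|$, $\widetilde v_{k+1}=P_s(A^T;w_k)w_k$ (polynomial determined with respect to $A^T$, so $\widetilde v_{k+1}\perp\mathcal{K}_s(A^T,w_k)$), $v_{k+1}=\widetilde v_{k+1}/\|\widetilde v_{k+1}\|$. Finally $\Phi_s(A):=\max_{v\in\mathbb{R}^n,\|v\|=1}\min_{p\in\mathcal{M}_s}\|p(A)v\|$. *)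

(* Defs.v *)
From HB Require Import structures.
From mathcomp Require Import all_boot all_order all_algebra.
From mathcomp Require Import boolp classical_sets reals.
Set Implicit Arguments. Unset Strict Implicit. Unset Printing Implicit Defensive.
Import Order.TTheory GRing.Theory Num.Theory.
Local Open Scope ring_scope.
Local Open Scope classical_set_scope.

Section ACI.
Variables (R : realType) (n : nat).
Implicit Types (A B : 'M[R]_n) (u v w : 'cV[R]_n) (p : {poly R}).

Definition dotv u v : R := (u^T *m v) 0 0.
Definition normv v : R := Num.sqrt (dotv v v).

Definition pmx A p : 'M[R]_n := \sum_(i < size p) p`_i *: A ^+ i.
Definition pmv A p v : 'cV[R]_n := pmx A p *m v.

(* s < d(A): every monic polynomial annihilating A has degree > s *)
Definition minpoly_deg_gt A (s : nat) : Prop :=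
  forall p, p \is monic -> pmx A p = 0 -> (s < (size p).-1)%N.

(* d(A,v) >= k: every monic polynomial p with p(A)v = 0 has degree >= k *)
Definition grade_ge A v (k : nat) : Prop :=
  forall p, p \is monic -> pmv A p v = 0 -> (k <= (size p).-1)%N.

Definition is_P B u (s : nat) p : Prop :=
  p \is monic /\ size p = s.+1 /\
  forall j : nat, (j < s)%N -> dotv (B ^+ j *m u) (pmv B p u) = 0.

(* P_s(. ; u)_B : the (unique, when d(B,u) >= s) such polynomial *)
Definition Ppoly B u (s : nat) : {poly R} := xget 0 [set p | is_P B u s p].

Definition normalize v : 'cV[R]_n := (normv v)^-1 *: v.

Definition aci_wt A s v := pmv A (Ppoly A v s) v.
Definition aci_vt A s w := pmv A^T (Ppoly A^T w s) w.

Fixpoint aci_v A s v0 (k : nat) : 'cV[R]_n :=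
  match k with
  | 0 => v0
  | k'.+1 => normalize (aci_vt A s (normalize (aci_wt A s (aci_v A s v0 k'))))
  end.
Definition aci_wtil A s v0 k := aci_wt A s (aci_v A s v0 k).
Definition aci_w A s v0 k := normalize (aci_wtil A s v0 k).
(* v~_{k+1} is [aci_vtil A s v0 k.+1]; by convention v~_0 := v0 (unused) *)
Definition aci_vtil A s v0 (k : nat) : 'cV[R]_n :=
  match k with 0 => v0 | k'.+1 => aci_vt A s (aci_w A s v0 k') end.

Definition Phi (s : nat) A : R :=
  sup [set x | exists v, normv v = 1 /\
         x = inf [set y | exists p, p \is monic /\ size p = s.+1 /\
                                    y = normv (pmv A p v)]].
End ACI.

(* Main.v *)
Require Import Defs.
From HB Require Import structures.
From mathcomp Require Import all_boot all_order all_algebra.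
From mathcomp Require Import boolp classical_sets reals.
From mathcomp Require Import ring lra.
Import Order.TTheory GRing.Theory Num.Theory.
Local Open Scope ring_scope.
Set Implicit Arguments. Unset Strict Implicit. Unset Printing Implicit Defensive.


Lemma trmxX (R : realType) n (B : 'M[R]_n) k : (B ^+ k)^T = B^T ^+ k.
Proof.
elim: k => [|k IH]; first by rewrite !expr0 trmx1.
by rewrite exprS exprSr -!mulmxE trmx_mul IH.
Qed.

Lemma pmx_tr (R : realType) n (B : 'M[R]_n) p : pmx B^T p = (pmx B p)^T.
Proof.
rewrite /pmx raddf_sum; apply: eq_bigr => i _.
by rewrite [RHS]linearZ /= trmxX.
Qed.

Lemma pmx_wide (R : realType) n (B : 'M[R]_n) (p : {poly R}) N : (size p <= N)%N ->
  pmx B p = \sum_(i < N) p`_i *: B ^+ i.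
Proof.
move=> le_p_N.
rewrite /pmx (big_ord_widen N (fun i => p`_i *: B ^+ i)) // big_mkcond.
by apply: eq_bigr => i _; case: ltnP => // le_p_i; rewrite nth_default ?scale0r.
Qed.

Lemma pmx_monic (R : realType) n (B : 'M[R]_n) (r : {poly R}) s : r \is monic -> size r = s.+1 ->
  pmx B r = B ^+ s + \sum_(i < s) r`_i *: B ^+ i.
Proof.
move=> mr sr; rewrite /pmx sr big_ord_recr /= addrC; congr (_ + _).
by move: mr; rewrite monicE /lead_coef sr /= => /eqP ->; rewrite scale1r.
Qed.

Lemma dotvDr (R : realType) n (u v w : 'cV[R]_n) : dotv u (v + w) = dotv u v + dotv u w.
Proof. by rewrite /dotv mulmxDr mxE. Qed.
Lemma dotvZr (R : realType) n (u v : 'cV[R]_n) a : dotv u (a *: v) = a * dotv u v.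
Proof. by rewrite /dotv -scalemxAr mxE. Qed.
Lemma dotvC (R : realType) n (u v : 'cV[R]_n) : dotv u v = dotv v u.
Proof.
by rewrite /dotv -[u^T *m v]trmxK trmx_mul trmxK mxE.
Qed.
Lemma dotvDl (R : realType) n (u v w : 'cV[R]_n) : dotv (v + w) u = dotv v u + dotv w u.
Proof. by rewrite dotvC dotvDr !(dotvC u). Qed.
Lemma dotvZl (R : realType) n (u v : 'cV[R]_n) a : dotv (a *: v) u = a * dotv v u.
Proof. by rewrite dotvC dotvZr dotvC. Qed.
Lemma dotvNr (R : realType) n (u v : 'cV[R]_n) : dotv u (- v) = - dotv u v.
Proof. by rewrite -scaleN1r dotvZr mulN1r. Qed.
Lemma dotvNl (R : realType) n (u v : 'cV[R]_n) : dotv (- v) u = - dotv v u.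
Proof. by rewrite dotvC dotvNr dotvC. Qed.
Lemma dotv0r (R : realType) n (u : 'cV[R]_n) : dotv u 0 = 0.
Proof. by rewrite /dotv mulmx0 mxE. Qed.
Lemma dotv_sumr (R : realType) n (u : 'cV[R]_n) I (r : seq I) (P : pred I) F :
  dotv u (\sum_(i <- r | P i) F i) = \sum_(i <- r | P i) dotv u (F i).
Proof.
elim/big_rec2: _ => [|i y1 y2 _ <-]; first by rewrite dotv0r.
by rewrite dotvDr.
Qed.
Lemma dotv_tr (R : realType) n (M : 'M[R]_n) (a b : 'cV[R]_n) :
  dotv (M^T *m a) b = dotv a (M *m b).
Proof. by rewrite /dotv trmx_mul trmxK mulmxA. Qed.
Lemma dotvE (R : realType) n (u v : 'cV[R]_n) : dotv u v = \sum_i u i 0 * v i 0.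
Proof. by rewrite /dotv mxE; apply: eq_bigr => i _; rewrite mxE. Qed.
Lemma dotvv_ge0 (R : realType) n (u : 'cV[R]_n) : 0 <= dotv u u.
Proof. by rewrite dotvE sumr_ge0 // => i _; rewrite -expr2 sqr_ge0. Qed.

Lemma dotvv_eq0 (R : realType) n (u : 'cV[R]_n) : dotv u u = 0 -> u = 0.
Proof.
rewrite dotvE => /eqP; rewrite psumr_eq0 => [/allP H|i _]; last by rewrite -expr2 sqr_ge0.
apply/matrixP => i j; rewrite (ord1 j) !mxE.
by have /(_ (mem_index_enum i)) := H i; rewrite implyTb -expr2 sqrf_eq0 => /eqP.
Qed.

Lemma normv_ge0 (R : realType) n (u : 'cV[R]_n) : 0 <= normv u.
Proof. exact: sqrtr_ge0. Qed.
Lemma normv_sq (R : realType) n (u : 'cV[R]_n) : normv u ^+ 2 = dotv u u.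
Proof. by rewrite /normv sqr_sqrtr // dotvv_ge0. Qed.
Lemma normv_eq0 (R : realType) n (u : 'cV[R]_n) : (normv u == 0) = (u == 0).
Proof.
apply/eqP/eqP => [|->]; last by rewrite /normv /dotv mulmx0 mxE sqrtr0.
by move=> h; apply: dotvv_eq0; rewrite -normv_sq h expr0n.
Qed.
Lemma normvZ (R : realType) n (u : 'cV[R]_n) a : normv (a *: u) = `|a| * normv u.
Proof. by rewrite /normv dotvZl dotvZr mulrA -expr2 sqrtrM ?sqr_ge0 // sqrtr_sqr. Qed.
Lemma normv_normalize (R : realType) n (u : 'cV[R]_n) : u != 0 -> normv (normalize u) = 1.
Proof.
move=> un0; have hp : 0 < normv u by rewrite lt_def normv_eq0 un0 normv_ge0.
by rewrite /normalize normvZ ger0_norm ?invr_ge0 ?normv_ge0 // mulVf // gt_eqF.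
Qed.
Lemma dotv_normalize (R : realType) n (u : 'cV[R]_n) : dotv (normalize u) u = normv u.
Proof.
have [->|un0] := eqVneq u 0; first by rewrite /normalize scaler0 dotv0r /normv dotv0r sqrtr0.
have hp : 0 < normv u by rewrite lt_def normv_eq0 un0 normv_ge0.
by rewrite /normalize dotvZl -normv_sq expr2 mulrA mulVf ?mul1r // gt_eqF.
Qed.

Lemma dotv_sub (R : realType) n (x u : 'cV[R]_n) :
  dotv (x - u) (x - u) = dotv x x + dotv u u - 2 * dotv x u.
Proof.
rewrite !dotvDl !dotvDr !dotvNl !dotvNr opprK (dotvC u x); ring.
Qed.

Lemma cs_unit (R : realType) n (a u : 'cV[R]_n) : normv u = 1 ->
  dotv a u <= normv a /\ (a != 0 -> dotv a u = normv a -> u = normalize a).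
Proof.
move=> hu.
have [->|an0] := eqVneq a 0.
  by split=> //; rewrite dotvC dotv0r /normv dotv0r sqrtr0.
have hp : 0 < normv a by rewrite lt_def normv_eq0 an0 normv_ge0.
set x := normalize a.
have hx : normv x = 1 by apply: normv_normalize.
have exu : dotv x u = (normv a)^-1 * dotv a u by rewrite /x /normalize dotvZl.
have e := dotv_sub x u.
rewrite -[dotv x x]normv_sq -[dotv u u]normv_sq hx hu exu expr1n in e.
split.
  have := dotvv_ge0 (x - u); rewrite e => h.
  have h2 : (normv a)^-1 * dotv a u <= 1 by lra.
  have hi : 0 < (normv a)^-1 by rewrite invr_gt0.
  by rewrite -(ler_pM2l hi) mulVf ?gt_eqF.

move=> _ eq; have : dotv (x - u) (x - u) = 0.
  by rewrite e eq mulVf ?gt_eqF //; lra.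
by move/dotvv_eq0/eqP; rewrite subr_eq0 => /eqP ->.
Qed.

Lemma pmx_horner (R : realType) n (B : 'M[R]_n.+1) p : pmx B p = horner_mx B p.
Proof.
have [->|pn0] := eqVneq p 0.
  by rewrite /pmx size_poly0 big_ord0 rmorph0.
rewrite /pmx /horner_mx /horner_morph horner_coef size_map_poly_id0; last first.
  apply/negP => /eqP/matrixP/(_ ord0 ord0); rewrite !mxE /= => /eqP.
  by rewrite mulr1n lead_coef_eq0 (negPf pn0).
apply: eq_bigr => i _; rewrite coef_map_id0 /=; last by rewrite raddf0.
by rewrite -mulmxE mul_scalar_mx.
Qed.

Lemma pmvZ (R : realType) n (B : 'M[R]_n.+1) p a u :
  pmv B (a *: p) u = a *: pmv B p u.
Proof. by rewrite /pmv !pmx_horner linearZ /= scalemxAl. Qed.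

Lemma pmvXnM (R : realType) n (B : 'M[R]_n.+1) p k u :
  pmv B ('X^k * p) u = B ^+ k *m pmv B p u.
Proof.
by rewrite /pmv !pmx_horner rmorphM rmorphXn /= horner_mx_X -mulmxE mulmxA.
Qed.

Lemma pmv_wide (R : realType) n (B : 'M[R]_n) (p : {poly R}) N u : (size p <= N)%N ->
  pmv B p u = \sum_(i < N) p`_i *: (B ^+ i *m u).
Proof.
move=> h; rewrite /pmv (pmx_wide _ h) mulmx_suml; apply: eq_bigr => i _.
by rewrite scalemxAl.
Qed.

Lemma pmv_monic (R : realType) n (B : 'M[R]_n) (r : {poly R}) s u :
  r \is monic -> size r = s.+1 ->
  pmv B r u = B ^+ s *m u + \sum_(i < s) r`_i *: (B ^+ i *m u).
Proof.
move=> mr sr; rewrite /pmv (pmx_monic _ mr sr) mulmxDl mulmx_suml; congr (_ + _).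
by apply: eq_bigr => i _; rewrite scalemxAl.
Qed.

Lemma grade_free (R : realType) n (B : 'M[R]_n.+1) u s (z : 'rV[R]_s) :
  grade_ge B u s -> \sum_(i < s) z 0 i *: (B ^+ i *m u) = 0 -> z = 0.
Proof.
case: s z => [|s] z hg hs; first by apply/rowP => -[].
pose q : {poly R} := \poly_(i < s.+1) z 0 (inord i).
have hq : pmv B q u = 0.
  rewrite (pmv_wide _ _ (size_poly _ _)) -[RHS]hs; apply: eq_bigr => i _.
  by rewrite coef_poly ltn_ord inord_val.
have [q0|qn0] := eqVneq q 0.
  apply/rowP => i; rewrite mxE.
  have := congr1 (fun p : {poly R} => p`_i) q0; rewrite coef_poly ltn_ord coef0.
  by rewrite inord_val.
exfalso.
have lcn0 : lead_coef q != 0 by rewrite lead_coef_eq0.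
have := hg ((lead_coef q)^-1 *: q).
rewrite monicE lead_coefZ mulVf // eqxx pmvZ hq scaler0 => /(_ isT erefl).
rewrite size_scale ?invr_eq0 //.
have := size_poly s.+1 (fun i => z 0 (inord i)); rewrite -/q.
by case: (size q) => [|m] /=; rewrite ?ltnn //; move=> h1 h2; have := leq_trans h2 h1; rewrite ltnn.
Qed.

Lemma is_P_exists (R : realType) n (B : 'M[R]_n.+1) u s :
  grade_ge B u s -> exists p, is_P B u s p.
Proof.
move=> hg.
case: s hg => [|s] hg.
  by exists 1; split; [exact: monic1 | split; [exact: size_poly1|by []]].
pose K : 'M[R]_(s.+1, n.+1) := \matrix_(i < s.+1, j < n.+1) (B ^+ i *m u) j 0.
have KE y (i : 'I_s.+1) : (K *m y) i 0 = dotv (B ^+ i *m u) y.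
  rewrite dotvE mxE; apply: eq_bigr => j _; by rewrite mxE.
have KtE (c : 'cV_s.+1) : K^T *m c = \sum_(i < s.+1) c i 0 *: (B ^+ i *m u).
  apply/matrixP => j k; rewrite (ord1 k) !mxE summxE; apply: eq_bigr => i _.
  by rewrite !mxE mulrC.
pose G := K *m K^T.
have Gu : G \in unitmx.
  rewrite -row_free_unit -kermx_eq0; apply/eqP/row_matrixP => i; rewrite row0.
  set z := row i (kermx G).
  have zG : z *m G = 0 by rewrite /z -row_mul mulmx_ker row0.
  have y0 : z *m K = 0.
    have : dotv (z *m K)^T (z *m K)^T = 0.
      by rewrite /dotv trmxK trmx_mul mulmxA -(mulmxA z K) zG mul0mx mxE.
    move/dotvv_eq0 => h; by rewrite -[z *m K]trmxK h trmx0.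
  apply: (grade_free hg).
  have := congr1 trmx y0; rewrite trmx_mul trmx0 KtE => h.
  rewrite -[RHS]h.
apply: eq_bigr => j _; by rewrite [in RHS]mxE.
pose c := - (invmx G *m (K *m (B ^+ s.+1 *m u))).
pose p : {poly R} := 'X^(s.+1) + \poly_(i < s.+1) c (inord i) 0.
have sp : size p = s.+2.
  by rewrite size_addl size_polyXn // ltnS size_poly.
have mp : p \is monic.
  by rewrite monicE lead_coefDl ?lead_coefXn // size_polyXn ltnS size_poly.
exists p; split => //; split => // j ltjs.
have pE : pmv B p u = B ^+ s.+1 *m u + K^T *m c.
  rewrite (pmv_monic B u mp sp) KtE; congr (_ + _); apply: eq_bigr => i _.
  by rewrite coefD coefXn coef_poly (ltn_ord i) inord_val (ltn_eqF (ltn_ord i)) add0r.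
have Kc : K *m (K^T *m c) = - (K *m (B ^+ s.+1 *m u)).
  by rewrite mulmxA -/G /c mulmxN (mulmxA G) mulmxV // mul1mx.
transitivity ((K *m pmv B p u) (Ordinal ltjs) 0); first by rewrite KE.
by rewrite pE mulmxDr Kc subrr mxE.

Qed.

Lemma core (R : realType) n (B : 'M[R]_n.+1) u s (P : {poly R}) :
  is_P B u s P -> grade_ge B u s.+1 ->
  [/\ pmv B P u != 0,
      forall r, r \is monic -> size r = s.+1 ->
        dotv (pmv B^T r (normalize (pmv B P u))) u = normv (pmv B P u),
      forall r, r \is monic -> size r = s.+1 -> normv (pmv B P u) <= normv (pmv B r u),
      grade_ge B^T (normalize (pmv B P u)) s.+1 &
      normv (normalize (pmv B P u)) = 1].
Proof.
move=> [mP [sP orth]] hg.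
set xt := pmv B P u; set x := normalize xt.
have xtn0 : xt != 0.
  by apply/negP => /eqP h; have := hg P mP h; rewrite sP /= ltnn.
have key r : r \is monic -> size r = s.+1 ->
    dotv xt (pmv B r u) = dotv xt (B ^+ s *m u).
  move=> mr sr; rewrite (pmv_monic B u mr sr) dotvDr dotv_sumr big1 ?addr0 // => i _.
  by rewrite dotvZr dotvC orth ?mulr0.
have key2 r : r \is monic -> size r = s.+1 -> dotv x (pmv B r u) = normv xt.
  move=> mr sr; rewrite /x /normalize dotvZl key // -(key P mP sP) -/xt -dotvZl.
  exact: dotv_normalize.
have hx : normv x = 1 by apply: normv_normalize.
have K r : r \is monic -> size r = s.+1 -> dotv (pmv B^T r x) u = normv xt.
  by move=> mr sr; rewrite /pmv pmx_tr dotv_tr key2.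
split => //.
- move=> r mr sr; have [h _] := cs_unit (pmv B r u) hx.
  by rewrite dotvC key2 in h.
- move=> q mq hq; rewrite leqNgt; apply/negP => lt.
  have qn0 : q != 0 by apply/negP => /eqP q0; move: mq; rewrite q0 monicE lead_coef0 eq_sym oner_eq0.
  have sq : (size q <= s.+1)%N by move: lt; case: (size q).
  pose k := (s.+1 - size q)%N.
  have mr : 'X^k * q \is monic by rewrite monicMl ?monicXn.
  have sr : size ('X^k * q) = s.+1.
    rewrite size_monicM ?monicXn // size_polyXn /k addSn /= subnK //.
  have := K _ mr sr; rewrite pmvXnM hq mulmx0 dotvC dotv0r => /esym/eqP.
  by rewrite normv_eq0 (negPf xtn0).
Qed.

Lemma step (R : realType) n (B : 'M[R]_n.+1) u s (P Q : {poly R}) :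
  is_P B u s P -> grade_ge B u s.+1 -> normv u = 1 ->
  is_P B^T (normalize (pmv B P u)) s Q ->
  let yt := pmv B^T Q (normalize (pmv B P u)) in
  [/\ normv (pmv B P u) <= normv yt,
      yt != 0 &
      dotv yt u = normv (pmv B P u)].
Proof.
move=> hP hg hu [mQ [sQ _]] yt.
have [xtn0 K _ _ _] := core hP hg.
have [h1 h2] := cs_unit yt hu.
have e : dotv yt u = normv (pmv B P u) by apply: K.
have hp : 0 < normv (pmv B P u) by rewrite lt_def normv_eq0 xtn0 normv_ge0.
have ytn0 : yt != 0.
  apply/negP => /eqP y0; move: e; rewrite y0 dotvC dotv0r => e.
  by move: hp; rewrite -e ltxx.
split => //; by rewrite -e.
Qed.


Lemma normv_bound (R : realType) n (M : 'M[R]_n) :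
  exists C, forall v : 'cV[R]_n, normv v = 1 -> normv (M *m v) <= C.
Proof.
exists (Num.sqrt (\sum_i (\sum_j `|M i j|) ^+ 2)) => v hv.
have vle j : `|v j 0| <= 1.
  have : v j 0 * v j 0 <= 1.
    have : dotv v v = 1 by rewrite -normv_sq hv expr1n.
    rewrite dotvE (bigD1 j) //= => <-; rewrite lerDl sumr_ge0 // => i _.
    by rewrite -expr2 sqr_ge0.
  move=> h; have := normr_ge0 (v j 0); have e : `|v j 0| * `|v j 0| = v j 0 * v j 0 by rewrite -normrM ger0_norm // -expr2 sqr_ge0.
  nra.
apply: ler_wsqrtr; rewrite dotvE; apply: ler_sum => i _.
rewrite -expr2 -real_normK ?num_real //; apply: lerXn2r; rewrite ?nnegrE ?normr_ge0 ?sumr_ge0 //.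
rewrite mxE; apply: le_trans (ler_norm_sum _ _ _) _; apply: ler_sum => j _.
by rewrite normrM ler_piMr.
Qed.

Local Open Scope classical_set_scope.

Definition Sset (R : realType) n s (B : 'M[R]_n) (v : 'cV[R]_n) : set R :=
  [set y | exists p, p \is monic /\ size p = s.+1 /\ y = normv (pmv B p v)].

Lemma Phi_E (R : realType) n s (B : 'M[R]_n) :
  Phi s B = sup [set x | exists v, normv v = 1 /\ x = inf (Sset s B v)].
Proof. by []. Qed.

Lemma pmvXn (R : realType) n (B : 'M[R]_n) s v : pmv B 'X^s v = B ^+ s *m v.
Proof.
rewrite (pmv_monic B v (monicXn _ s) (size_polyXn _ s)) big1 ?addr0 // => i _.
by rewrite coefXn ltn_eqF // scale0r.
Qed.

Lemma Sset_n0 (R : realType) n s (B : 'M[R]_n) v : Sset s B v !=set0.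
Proof. by exists (normv (pmv B 'X^s v)), 'X^s; rewrite monicXn size_polyXn. Qed.

Lemma Sset_lb (R : realType) n s (B : 'M[R]_n) v : has_lbound (Sset s B v).
Proof. by exists 0 => y [p [_ [_ ->]]]; apply: normv_ge0. Qed.

Lemma inner_le (R : realType) n s (B : 'M[R]_n) v r :
  r \is monic -> size r = s.+1 -> inf (Sset s B v) <= normv (pmv B r v).
Proof. by move=> mr sr; apply: ge_inf; [apply: Sset_lb | exists r]. Qed.

Lemma inner_ge (R : realType) n s (B : 'M[R]_n) v x :
  (forall r, r \is monic -> size r = s.+1 -> x <= normv (pmv B r v)) ->
  x <= inf (Sset s B v).
Proof.
move=> h; apply: lb_le_inf; first exact: Sset_n0.
by move=> y [p [mp [sp ->]]]; apply: h.
Qed.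

Lemma inner_ge0 (R : realType) n s (B : 'M[R]_n) v : 0 <= inf (Sset s B v).
Proof. by apply: inner_ge => r _ _; apply: normv_ge0. Qed.

Lemma Phi_ub (R : realType) n s (B : 'M[R]_n) v :
  normv v = 1 -> inf (Sset s B v) <= Phi s B.
Proof.
move=> hv; rewrite Phi_E; apply: ub_le_sup; last by exists v.
have [C hC] := normv_bound (B ^+ s).
exists C => x [w [hw ->]]; apply: le_trans (inner_le B w (monicXn _ s) (size_polyXn _ s)) _.
by rewrite pmvXn; apply: hC.
Qed.

Lemma pad (R : realType) n (B : 'M[R]_n.+1) s (q : {poly R}) v :
  q \is monic -> ~~ (s.+1 <= (size q).-1)%N -> pmv B q v = 0 ->
  exists r, [/\ r \is monic, size r = s.+1 & pmv B r v = 0].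
Proof.
move=> mq lt hq.
have qn0 : q != 0 by apply/negP => /eqP q0; move: mq; rewrite q0 monicE lead_coef0 eq_sym oner_eq0.
have sq : (size q <= s.+1)%N by move: lt; rewrite -ltnNge; case: (size q).
pose k := (s.+1 - size q)%N.
exists ('X^k * q); split.
- by rewrite monicMl ?monicXn.
- by rewrite size_monicM ?monicXn // size_polyXn /k addSn /= subnK.
- by rewrite pmvXnM hq mulmx0.
Qed.

Lemma Phi_le (R : realType) n (B : 'M[R]_n.+1) s (v0 : 'cV[R]_n.+1) :
  normv v0 = 1 -> Phi s B <= Phi s B^T.
Proof.
move=> hv0; rewrite [Phi s B]Phi_E; apply: ge_sup; first by exists (inf (Sset s B v0)), v0.
move=> x [v [hv ->]].
case: (pselect (grade_ge B v s.+1)) => hg.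
- have hgs : grade_ge B v s by move=> p mp hp; have := hg p mp hp; apply: ltnW.
  have [P hP] := is_P_exists hgs.
  have [xtn0 K _ _ hx] := core hP hg.
  apply: le_trans (inner_le B v (proj1 hP) (proj1 (proj2 hP))) _.
  apply: le_trans (Phi_ub _ _ hx).
  apply: inner_ge => r mr sr; rewrite -(K r mr sr); exact: (cs_unit _ hv).1.
- have [q [mq hq lt]] : exists q, [/\ q \is monic, pmv B q v = 0 & ~~ (s.+1 <= (size q).-1)%N].
    move/existsNP: hg => [q /not_implyP [mq /not_implyP [hq /negP h]]]; by exists q.
  have [r [mr sr hr]] := pad mq lt hq.
  apply: le_trans (inner_le B v mr sr) _; rewrite hr.
  have -> : normv (0 : 'cV[R]_n.+1) = 0 by apply/eqP; rewrite normv_eq0.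
  exact: le_trans (inner_ge0 s B^T v) (Phi_ub _ _ hv).
Qed.

Lemma eq_iff (R : realType) n (a y u : 'cV[R]_n) :
  normv u = 1 -> a != 0 -> y != 0 -> dotv y u = normv a ->
  (normv a = normv y <-> exists al : R, al != 0 /\ u = al *: normalize y).
Proof.
move=> hu an0 yn0 e.
have ha : 0 < normv a by rewrite lt_def normv_eq0 an0 normv_ge0.
have hy : 0 < normv y by rewrite lt_def normv_eq0 yn0 normv_ge0.
split.
  move=> eq; exists 1; split; first exact: oner_neq0.
  by rewrite scale1r; apply: (cs_unit y hu).2 => //; rewrite e.
move=> [al [aln0 hal]].
have nal : `|al| = 1 by move: hu; rewrite hal normvZ normv_normalize // mulr1.
have e2 : dotv y u = al * normv y.
  by rewrite hal dotvZr dotvC dotv_normalize.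
have alp : 0 < al.
  have : 0 < al * normv y by rewrite -e2 e.
  by rewrite pmulr_lgt0.
have al1 : al = 1 by rewrite -nal gtr0_norm.
by rewrite -e e2 al1 mul1r.
Qed.


Lemma Ppoly_spec (R : realType) n (B : 'M[R]_n.+1) u s :
  grade_ge B u s.+1 -> is_P B u s (Ppoly B u s).
Proof.
move=> hg; apply: xgetPex; apply: is_P_exists.
by move=> p mp hp; have := hg p mp hp; apply: ltnW.
Qed.

Lemma inv (R : realType) n (A : 'M[R]_n.+1) s v0 :
  normv v0 = 1 -> grade_ge A v0 s.+1 ->
  forall k, normv (aci_v A s v0 k) = 1 /\ grade_ge A (aci_v A s v0 k) s.+1.
Proof.
move=> hv0 hg0; elim=> [|k [hv hg]] //=.
set u := aci_v A s v0 k.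
have hP := Ppoly_spec hg.
have [_ _ _ gw hw] := core hP hg.
have hQ := Ppoly_spec gw.
have [_ _ _ gv hv'] := core hQ gw.
rewrite trmxK in gv.
by split.
Qed.

Lemma main_succ (R : realType) n (A : 'M[R]_n.+1) s (v0 : 'cV[R]_n.+1) :
  normv v0 = 1 -> grade_ge A v0 s.+1 ->
  let v := aci_v A s v0 in
  let w := aci_w A s v0 in
  let wt := aci_wtil A s v0 in
  let vt := aci_vtil A s v0 in
  (forall k : nat,
     wt k != 0 /\ vt k.+1 != 0 /\
     grade_ge A (v k) s.+1 /\ grade_ge A^T (w k) s.+1) /\
  (forall k : nat,
     normv (wt k) <= normv (vt k.+1) /\
     normv (vt k.+1) <= normv (wt k.+1) /\
     normv (wt k.+1) <= normv (vt k.+2) /\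
     normv (vt k.+2) <= Phi s A^T) /\
  Phi s A^T = Phi s A /\
  (forall k : nat,
     normv (wt k) = normv (vt k.+1) <->
     exists alpha : R, alpha != 0 /\ v k = alpha *: v k.+1) /\
  (forall k : nat,
     normv (vt k.+1) = normv (wt k.+1) <->
     exists beta : R, beta != 0 /\ w k = beta *: w k.+1).
Proof.
move=> hv0 hg0 v w wt vt.
have I := inv hv0 hg0.
have F k : wt k != 0 /\ vt k.+1 != 0 /\ grade_ge A^T (w k) s.+1 /\ normv (w k) = 1 /\
   normv (wt k) <= normv (vt k.+1) /\ dotv (vt k.+1) (v k) = normv (wt k).
  move: (I k) => [hv hg].
  have hP := Ppoly_spec hg.
  have [xtn0 _ _ gw hw] := core hP hg.
  have hQ := Ppoly_spec gw.
  have [le ytn0 e] := step hP hg hv hQ.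
  by do !split.
have G k : [/\ normv (vt k.+1) <= normv (wt k.+1) &
              dotv (wt k.+1) (w k) = normv (vt k.+1)].
  have [_ [_ [gw [hw _]]]] := F k.
  move: (I k.+1) => [hv1 hg1].
  have hP := Ppoly_spec gw.
  have hQ : is_P A^T^T (normalize (pmv A^T (Ppoly A^T (w k) s) (w k))) s
                (Ppoly A (v k.+1) s).
    by rewrite trmxK; apply: Ppoly_spec.
  have [le ytn0 e] := step hP gw hw hQ.
  rewrite trmxK in le e.
  by split.
have H k : normv (vt k.+1) <= Phi s A^T.
  have [_ [_ [gw [hw _]]]] := F k.
  have hP := Ppoly_spec gw.
  have [_ _ ls _ _] := core hP gw.
  apply: le_trans (Phi_ub _ _ hw).
  exact: inner_ge.
split; [|split; [|split; [|split]]].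
- move=> k; have [? [? [? _]]] := F k; by split; [|split; [|split]] => //; case: (I k).
- move=> k; have [_ [_ [_ [_ [? _]]]]] := F k; have [? _] := G k; have [_ [_ [_ [_ [? _]]]]] := F k.+1.
  by split; [|split; [|split]] => //; apply: H.
- apply/le_anti/andP; split.
    by have := @Phi_le _ _ A^T s v0 hv0; rewrite trmxK.
  exact: (@Phi_le _ _ A s v0 hv0).
- move=> k; have [? [? [_ [_ [_ e]]]]] := F k; have [hv _] := I k.
  exact: eq_iff hv _ _ e.
- move=> k; have [_ [? [_ [hw _]]]] := F k; have [? _] := F k.+1; have [_ e] := G k.
  exact: eq_iff hw _ _ e.
Qed.

Local Close Scope classical_set_scope.

Theorem theorem3p3 (R : realType) (n : nat) (A : 'M[R]_n) (s : nat)
  (v0 : 'cV[R]_n) :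
  (1 <= s)%N -> minpoly_deg_gt A s ->
  normv v0 = 1 -> grade_ge A v0 s.+1 ->
  let v := aci_v A s v0 in
  let w := aci_w A s v0 in
  let wt := aci_wtil A s v0 in
  let vt := aci_vtil A s v0 in
  (forall k : nat,
     wt k != 0 /\ vt k.+1 != 0 /\
     grade_ge A (v k) s.+1 /\ grade_ge A^T (w k) s.+1) /\
  (forall k : nat,
     normv (wt k) <= normv (vt k.+1) /\
     normv (vt k.+1) <= normv (wt k.+1) /\
     normv (wt k.+1) <= normv (vt k.+2) /\
     normv (vt k.+2) <= Phi s A^T) /\
  Phi s A^T = Phi s A /\
  (forall k : nat,
     normv (wt k) = normv (vt k.+1) <->
     exists alpha : R, alpha != 0 /\ v k = alpha *: v k.+1) /\
  (forall k : nat,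
     normv (vt k.+1) = normv (wt k.+1) <->
     exists beta : R, beta != 0 /\ w k = beta *: w k.+1).

Proof.
case: n A v0 => [|n] A v0 _ _ hv0 hg0.
  exfalso; have v00 : v0 = 0 by apply/matrixP => -[].
  move: hv0; rewrite v00 => /eqP; rewrite eq_sym.
  have -> : normv (0 : 'cV[R]_0) = 0 by apply/eqP; rewrite normv_eq0.
  by rewrite oner_eq0.
exact: main_succ hv0 hg0.
Qed.
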